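(* For $a\in\mathbb{R}$ define $\mathcal{L}_a:\mathcal{M}_2\to\mathcal{M}_2$ by $$\mathcal{L}_a(X)=(\operatorname{Tr}X)\,\mathbb{1}-a\,\Delta(X)-(2-a)X,\qquad \Delta(X)=P_0XP_0+P_1XP_1,$$ where $P_0=|0\rangle\langle 0|$, $P_1=|1\rangle\langle 1|$ for the standard basis $\{|0\rangle,|1\rangle\}$ of $\mathbb{C}^2$. Then $e^{t\mathcal{L}_a}$ is a unital Schwarz map for every $t\ge 0$ if and only if $a\le 3/2$.
   Context: A unital Schwarz map on $\mathcal{M}_n$ is a linear map $\Phi$ with $\Phi(\mathbb{1})=\mathbb{1}$ and $\Phi(X^\dagger X)\ge\Phi(X)^\dagger\Phi(X)$ for all $X\in\mathcal{M}_n$. Note $\mathcal{L}_a$ is self-dual with respect to the Hilbert–Schmidt inner product and $\mathcal{L}_a(\mathbb{1})=0$. *)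

(* Defs.v *)
From HB Require Import structures.
From mathcomp Require Import all_boot all_order all_algebra.
From mathcomp Require Import all_classical all_reals all_analysis.
From mathcomp Require Import complex.
Set Implicit Arguments. Unset Strict Implicit. Unset Printing Implicit Defensive.
Import Order.TTheory GRing.Theory Num.Theory.
Import numFieldNormedType.Exports.
Local Open Scope ring_scope.

Section Defs.
Variable R : realType.
Local Notation C := R[i].

Definition rC (x : R) : C := Complex x 0.

Definition adj (m n : nat) (X : 'M[C]_(m, n)) : 'M[C]_(n, m) := (map_mx (@Num.conj C) X)^T.

(* positive semidefinite: <v, A v> is a nonnegative real for all v *)
Definition psd (A : 'M[C]_2) : Prop :=
  forall v : 'cV[C]_2, 0 <= (adj v *m A *m v) 0 0.

Definition loewner_ge (A B : 'M[C]_2) : Prop := psd (A - B).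

Definition P0 : 'M[C]_2 := delta_mx 0 0.
Definition P1 : 'M[C]_2 := delta_mx 1 1.

Definition Delta (X : 'M[C]_2) : 'M[C]_2 := P0 *m X *m P0 + P1 *m X *m P1.

Definition La (a : R) (X : 'M[C]_2) : 'M[C]_2 :=
  (\tr X)%:M - rC a *: Delta X - rC (2 - a) *: X.

Definition expLa_partial (a t : R) (X : 'M[C]_2) (N : nat) : 'M[C]_2 :=
  \sum_(k < N) rC (t ^+ k / (k`!)%:R) *: iter k (La a) X.

Definition expLa (a t : R) (X : 'M[C]_2) : 'M[C]_2 :=
  \matrix_(i, j)
    Complex (limn (fun N => @complex.Re R (expLa_partial a t X N i j)))
            (limn (fun N => @complex.Im R (expLa_partial a t X N i j))).

Definition unital_schwarz (Phi : 'M[C]_2 -> 'M[C]_2) : Prop :=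
  [/\ (forall (c : C) (X Y : 'M[C]_2), Phi (c *: X + Y) = c *: Phi X + Phi Y),
      Phi 1%:M = 1%:M
    & forall X : 'M[C]_2, loewner_ge (Phi (adj X *m X)) (adj (Phi X) *m Phi X)].

End Defs.

(* Main.v *)
Require Import Defs.
From HB Require Import structures.
From mathcomp Require Import all_boot all_order all_algebra.
From mathcomp Require Import all_classical all_reals all_analysis.
From mathcomp Require Import complex.
From mathcomp Require Import ring lra.
Import Order.TTheory GRing.Theory Num.Theory.
Import numFieldNormedType.Exports.
Local Open Scope classical_set_scope.
Local Open Scope ring_scope.
Section H.
Variable R : realType.
Local Notation C := R[i].

Lemma rCE (x : R) : rC x = real_complex R x. Proof. by []. Qed.
Lemma rCD (x y : R) : rC (x + y) = rC x + rC y. Proof. by rewrite !rCE rmorphD. Qed.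
Lemma rCB (x y : R) : rC (x - y) = rC x - rC y. Proof. by rewrite !rCE rmorphB. Qed.
Lemma rCM (x y : R) : rC (x * y) = rC x * rC y. Proof. by rewrite !rCE rmorphM. Qed.
Lemma rC1 : rC 1 = 1 :> C. Proof. by rewrite !rCE rmorph1. Qed.
Lemma rC0 : rC 0 = 0 :> C. Proof. by rewrite !rCE rmorph0. Qed.
Lemma rC_ge0 (x : R) : (0 <= rC x) = (0 <= x). Proof. by rewrite rCE ler0c. Qed.
Lemma conj_rC (x : R) : Num.conj (rC x) = rC x.
Proof. by apply: conj_Creal; rewrite rCE complex_real. Qed.

Lemma rC2 : rC 2 = 2 :> C. Proof. by rewrite rCE rmorph_nat. Qed.

Lemma mx2P (A B : 'M[C]_2) : A 0 0 = B 0 0 -> A 0 1 = B 0 1 -> A 1 0 = B 1 0 ->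
  A 1 1 = B 1 1 -> A = B.
Proof.
move=> h1 h2 h3 h4; apply/matrixP => i j.
case: i => [[|[|//]] hi]; case: j => [[|[|//]] hj].
all: have e0 : forall h : (0 < 2)%N, Ordinal h = 0 by move=> h; apply: val_inj.
all: have e1 : forall h : (1 < 2)%N, Ordinal h = 1 by move=> h; apply: val_inj.
all: by rewrite ?e0 ?e1.
Qed.

Lemma sum2 (V : nmodType) (f : 'I_2 -> V) : \sum_(i < 2) f i = f 0 + f 1.
Proof. by rewrite big_ord_recr big_ord_recr big_ord0 /= add0r; congr (f _ + f _); apply: val_inj. Qed.


Lemma La00 a (Y : 'M[C]_2) : La a Y 0 0 = Y 1 1 - Y 0 0.
Proof.
rewrite /La /Delta /P0 /P1 !mxE /mxtrace !sum2 /= !mxE !sum2 !mxE /= rCB rC2; ring.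
Qed.
Lemma La11 a (Y : 'M[C]_2) : La a Y 1 1 = Y 0 0 - Y 1 1.
Proof. rewrite /La /Delta /P0 /P1 !mxE /mxtrace !sum2 /= !mxE !sum2 !mxE /= rCB rC2; ring. Qed.
Lemma La01 a (Y : 'M[C]_2) : La a Y 0 1 = rC (a - 2) * Y 0 1.
Proof. rewrite /La /Delta /P0 /P1 !mxE /mxtrace !sum2 /= !mxE !sum2 !mxE /= !rCB rC2; ring. Qed.
Lemma La10 a (Y : 'M[C]_2) : La a Y 1 0 = rC (a - 2) * Y 1 0.
Proof. rewrite /La /Delta /P0 /P1 !mxE /mxtrace !sum2 /= !mxE !sum2 !mxE /= !rCB rC2; ring. Qed.


Definition c0 (k : nat) : R := (0 ^+ k + (-2) ^+ k) / 2.
Definition c1 (k : nat) : R := (0 ^+ k - (-2) ^+ k) / 2.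

Lemma c0S k : c0 k.+1 = c1 k - c0 k.
Proof. rewrite /c0 /c1 !exprS mul0r; by field. Qed.
Lemma c1S k : c1 k.+1 = c0 k - c1 k.
Proof. rewrite /c0 /c1 !exprS mul0r; by field. Qed.

Lemma iterLa a (X : 'M[C]_2) k :
  [/\ iter k (La a) X 0 0 = rC (c0 k) * X 0 0 + rC (c1 k) * X 1 1,
      iter k (La a) X 1 1 = rC (c1 k) * X 0 0 + rC (c0 k) * X 1 1,
      iter k (La a) X 0 1 = rC ((a - 2) ^+ k) * X 0 1
    & iter k (La a) X 1 0 = rC ((a - 2) ^+ k) * X 1 0].
Proof.
elim: k => [|k [h00 h11 h01 h10]].
  rewrite /c0 /c1 /= !expr0 (_ : ((1 + 1) / 2 : R) = 1); last by field.
  rewrite (_ : ((1 - 1) / 2 : R) = 0); last by field.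
  by rewrite rC1 rC0; split; rewrite ?mul1r ?mul0r ?addr0 ?add0r.
rewrite [iter k.+1 _ _]/= La00 La11 La01 La10 h00 h11 h01 h10 c0S c1S (exprS (a - 2)) (rCM (a - 2)) !rCB.
split; ring.
Qed.

Lemma ReL (u v : R) (p q : C) :
  complex.Re (rC u * p + rC v * q) = u * complex.Re p + v * complex.Re q.
Proof. by case: p => p1 p2; case: q => q1 q2 /=; ring. Qed.
Lemma ImL (u v : R) (p q : C) :
  complex.Im (rC u * p + rC v * q) = u * complex.Im p + v * complex.Im q.
Proof. by case: p => p1 p2; case: q => q1 q2 /=; ring. Qed.

Lemma lim_lin (u v : nat -> R) (U V : R) (p q : C) :
  u n @[n --> \oo] --> U -> v n @[n --> \oo] --> V ->
  Complex (limn (fun N => complex.Re (rC (u N) * p + rC (v N) * q)))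
          (limn (fun N => complex.Im (rC (u N) * p + rC (v N) * q)))
  = rC U * p + rC V * q.
Proof.
move=> hu hv.
have -> : (fun N => complex.Re (rC (u N) * p + rC (v N) * q)) =
   (fun N => u N * complex.Re p + v N * complex.Re q) by apply: funext => N; rewrite ReL.
have -> : (fun N => complex.Im (rC (u N) * p + rC (v N) * q)) =
   (fun N => u N * complex.Im p + v N * complex.Im q) by apply: funext => N; rewrite ImL.
have L (a b : R) : limn (fun N => u N * a + v N * b) = U * a + V * b.
  by apply: cvg_lim; [exact: Rhausdorff | apply: cvgD; apply: cvgMr_tmp].
rewrite !L.
by case: p => p1 p2; case: q => q1 q2 /=; congr Complex; ring.
Qed.

Lemma ser_cvg (x : R) : series (exp_coeff x) n @[n --> \oo] --> expR x.
Proof. exact: (is_cvg_series_exp_coeff x). Qed.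

Lemma iter00 a (X : 'M[C]_2) k :
  iter k (La a) X 0 0 = rC (c0 k) * X 0 0 + rC (c1 k) * X 1 1.
Proof. by case: (iterLa a X k). Qed.
Lemma iter11 a (X : 'M[C]_2) k :
  iter k (La a) X 1 1 = rC (c1 k) * X 0 0 + rC (c0 k) * X 1 1.
Proof. by case: (iterLa a X k). Qed.
Lemma iter01 a (X : 'M[C]_2) k : iter k (La a) X 0 1 = rC ((a - 2) ^+ k) * X 0 1.
Proof. by case: (iterLa a X k). Qed.
Lemma iter10 a (X : 'M[C]_2) k : iter k (La a) X 1 0 = rC ((a - 2) ^+ k) * X 1 0.
Proof. by case: (iterLa a X k). Qed.

Lemma sum_lin (f g h : nat -> R) (p q : C) N :
  \sum_(k < N) rC (h k) * (rC (f k) * p + rC (g k) * q) =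
  rC (\sum_(k < N) h k * f k) * p + rC (\sum_(k < N) h k * g k) * q.
Proof.
elim: N => [|N IH]; first by rewrite !big_ord0 rC0; ring.
by rewrite !big_ord_recr /= IH !rCD !rCM; ring.
Qed.
Lemma sum_lin1 (f h : nat -> R) (p : C) N :
  \sum_(k < N) rC (h k) * (rC (f k) * p) = rC (\sum_(k < N) h k * f k) * p.
Proof.
elim: N => [|N IH]; first by rewrite !big_ord0 rC0; ring.
by rewrite !big_ord_recr /= IH !rCD !rCM; ring.
Qed.

Definition mk2 (x y z w : C) : 'M[C]_2 :=
  \matrix_(i < 2, j < 2) if i == 0 then (if j == 0 then x else y)
                         else (if j == 0 then z else w).

Definition Phi (s q : R) (X : 'M[C]_2) : 'M[C]_2 :=
  mk2 (rC s * X 0 0 + rC (1 - s) * X 1 1) (rC q * X 0 1)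
      (rC q * X 1 0) (rC (1 - s) * X 0 0 + rC s * X 1 1).

Lemma sum_c0 (t : R) N : \sum_(k < N) t ^+ k / k`!%:R * c0 k =
  (series (exp_coeff (t * 0)) N + series (exp_coeff (t * -2)) N) / 2.
Proof.
rewrite /series /= !big_mkord -big_split /= big_distrl /=; apply: eq_bigr => k _.
by rewrite /exp_coeff /= /c0 !exprMn; field.
Qed.
Lemma sum_c1 (t : R) N : \sum_(k < N) t ^+ k / k`!%:R * c1 k =
  (series (exp_coeff (t * 0)) N - series (exp_coeff (t * -2)) N) / 2.
Proof.
rewrite /series /= !big_mkord -sumrB /= big_distrl /=; apply: eq_bigr => k _.
by rewrite /exp_coeff /= /c1 !exprMn; field.
Qed.
Lemma sum_g (t g : R) N : \sum_(k < N) t ^+ k / k`!%:R * g ^+ k =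
  series (exp_coeff (t * g)) N.
Proof.
rewrite /series /= !big_mkord; apply: eq_bigr => k _.
by rewrite /exp_coeff /= !exprMn; field.
Qed.

Definition sig (t : R) (N : nat) : R :=
  (series (exp_coeff (t * 0)) N + series (exp_coeff (t * -2)) N) / 2.
Definition tau (t : R) (N : nat) : R :=
  (series (exp_coeff (t * 0)) N - series (exp_coeff (t * -2)) N) / 2.

Lemma partialE a t (X : 'M[C]_2) : expLa_partial a t X = fun N =>
  mk2 (rC (sig t N) * X 0 0 + rC (tau t N) * X 1 1)
      (rC (series (exp_coeff (t * (a - 2))) N) * X 0 1 + rC 0 * X 0 1)
      (rC (series (exp_coeff (t * (a - 2))) N) * X 1 0 + rC 0 * X 1 0)
      (rC (tau t N) * X 0 0 + rC (sig t N) * X 1 1).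
Proof.
apply: funext => N; apply: mx2P; rewrite /expLa_partial summxE !mxE /=.
all: rewrite /sig /tau -?sum_c0 -?sum_c1 -?sum_g ?rC0 ?mul0r ?addr0.
all: under eq_bigr do rewrite mxE ?iter00 ?iter11 ?iter01 ?iter10.
- exact: (sum_lin c0 c1 (fun k => t ^+ k / k`!%:R)).
- exact: (sum_lin1 (fun k => (a - 2) ^+ k) (fun k => t ^+ k / k`!%:R)).
- exact: (sum_lin1 (fun k => (a - 2) ^+ k) (fun k => t ^+ k / k`!%:R)).
- exact: (sum_lin c1 c0 (fun k => t ^+ k / k`!%:R)).
Qed.

Lemma sig_cvg t : sig t n @[n --> \oo] --> (1 + expR (t * -2)) / 2.
Proof.
rewrite -[X in X + _](expR0 R) -(mulr0 t).
by apply: cvgMr_tmp; apply: cvgD; apply: ser_cvg.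
Qed.
Lemma tau_cvg t : tau t n @[n --> \oo] --> 1 - (1 + expR (t * -2)) / 2.
Proof.
rewrite (_ : 1 - (1 + expR (t * -2)) / 2 = (expR (t * 0) - expR (t * -2)) / 2); last first.
  by rewrite mulr0 expR0; field.
by apply: cvgMr_tmp; apply: cvgB; apply: ser_cvg.
Qed.

Lemma lim_lin' (f : nat -> C) (u v : nat -> R) (U V : R) (p q : C) :
  (forall N, f N = rC (u N) * p + rC (v N) * q) ->
  u n @[n --> \oo] --> U -> v n @[n --> \oo] --> V ->
  Complex (limn (fun N => complex.Re (f N))) (limn (fun N => complex.Im (f N)))
  = rC U * p + rC V * q.
Proof.
move=> hf hu hv; have -> : f = fun N => rC (u N) * p + rC (v N) * q.
  by apply: funext.
exact: lim_lin.
Qed.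

Lemma ser0_cvg : (fun _ : nat => 0 : R) n @[n --> \oo] --> (0 : R).
Proof. exact: cvg_cst. Qed.

Lemma expLa_Phi a t (X : 'M[C]_2) :
  expLa a t X = Phi ((1 + expR (t * -2)) / 2) (expR (t * (a - 2))) X.
Proof.
rewrite /expLa /Phi; apply: mx2P; rewrite !mxE /=.
- apply: (@lim_lin' (fun N => expLa_partial a t X N 0 0) _ _ _ _ _ _ _ (sig_cvg t) (tau_cvg t)).
  by move=> N; rewrite partialE mxE.
- rewrite -[RHS]addr0 -(mul0r (X 0 1)) -rC0.
  apply: (@lim_lin' (fun N => expLa_partial a t X N 0 1) _ _ _ _ _ _ _ (ser_cvg _) ser0_cvg).
  by move=> N; rewrite partialE mxE.
- rewrite -[RHS]addr0 -(mul0r (X 1 0)) -rC0.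
  apply: (@lim_lin' (fun N => expLa_partial a t X N 1 0) _ _ _ _ _ _ _ (ser_cvg _) ser0_cvg).
  by move=> N; rewrite partialE mxE.
- apply: (@lim_lin' (fun N => expLa_partial a t X N 1 1) _ _ _ _ _ _ _ (tau_cvg t) (sig_cvg t)).
  by move=> N; rewrite partialE mxE.
Qed.

Local Notation "x ^*" := (Num.conj x).

Lemma cD (x y : C) : (x + y)^* = x^* + y^*. Proof. exact: rmorphD. Qed.
Lemma cB (x y : C) : (x - y)^* = x^* - y^*. Proof. exact: rmorphB. Qed.
Lemma cN (x : C) : (- x)^* = - x^*. Proof. exact: rmorphN. Qed.
Lemma rCX2 (x : R) : rC (x ^+ 2) = rC x * rC x. Proof. by rewrite expr2 rCM. Qed.
Lemma cz : (0 : C)^* = 0. Proof. exact: rmorph0. Qed.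
Lemma co : (1 : C)^* = 1. Proof. exact: rmorph1. Qed.
Lemma cM (x y : C) : (x * y)^* = x^* * y^*. Proof. exact: rmorphM. Qed.
Lemma cK (x : C) : (x^*)^* = x. Proof. exact: conjCK. Qed.

Definition sq (w : C) := w * w^*.

Definition Tf (s q : R) (x y z w v0 v1 : C) : C :=
  rC (s - q ^+ 2) * (sq (z * v0) + sq (y * v1))
  + rC ((1 - s) * (s - q ^+ 2)) * (sq ((x - w) * v0) + sq ((x - w) * v1))
  + rC (1 - s) * sq (y^* * v0 + rC q * (x - w)^* * v1)
  + rC (1 - s) * sq (rC q * (x - w)^* * v0 - z^* * v1).

Lemma schwarz_id s q (X : 'M[C]_2) (v : 'cV[C]_2) :
  (adj v *m (Phi s q (adj X *m X) - adj (Phi s q X) *m Phi s q X) *m v) 0 0 =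
  Tf s q (X 0 0) (X 0 1) (X 1 0) (X 1 1) (v 0 0) (v 1 0).
Proof.
rewrite /Tf /sq /adj /Phi /mk2 !(mxE, sum2) /=.
rewrite !(cD, cM, cB, cN, cK, conj_rC) !(rCB, rCM, rCX2, rC1).
ring.
Qed.

Lemma sq_ge0 (c : R) (w : C) : 0 <= c -> 0 <= rC c * sq w.
Proof. by move=> hc; rewrite mulr_ge0 ?rC_ge0 // /sq mul_conjC_ge0. Qed.

Lemma Phi_schwarz (s q : R) : 0 <= 1 - s -> 0 <= s - q ^+ 2 -> unital_schwarz (Phi s q).
Proof.
move=> h1 h2; split.
- by move=> c X Y; apply: mx2P; rewrite /Phi /mk2 !mxE /=; ring.
- by apply: mx2P; rewrite /Phi /mk2 !mxE /= ?rCB ?rC1; ring.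
move=> X; rewrite /loewner_ge /psd => v; rewrite schwarz_id /Tf.
have s0 (w : C) : 0 <= sq w by rewrite /sq mul_conjC_ge0.
have t2 (c : R) (w1 w2 : C) : 0 <= c -> 0 <= rC c * (sq w1 + sq w2).
  by move=> hc; rewrite mulr_ge0 ?rC_ge0 // addr_ge0.
by rewrite !addr_ge0 ?t2 ?sq_ge0 // mulr_ge0.
Qed.

Lemma Phi_nec (s q : R) : unital_schwarz (Phi s q) -> q ^+ 2 <= s.
Proof.
move=> [_ _ H]; have := H (delta_mx 0 1) (delta_mx 1 0).
rewrite /loewner_ge /psd schwarz_id /Tf /sq !mxE /= !(cz, co, subr0, mul0r, mulr0, mul1r, mulr1, addr0, add0r, oppr0).
by rewrite rC_ge0 subr_ge0.
Qed.
End H.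
Theorem mainTheorem5 (R : realType) (a : R) :
  (forall t : R, 0 <= t -> unital_schwarz (expLa a t)) <-> a <= 3 / 2.
Proof.
have EL t : expLa a t = @Phi R ((1 + expR (t * -2)) / 2) (expR (t * (a - 2))).
  by apply: funext => X; rewrite expLa_Phi.
split.
  move=> H; rewrite leNgt; apply/negP => ha.
  pose t := (2 * a - 3) / 4.
  have ht : 0 <= t by rewrite /t; lra.
  have := H t ht; rewrite EL => /Phi_nec hq.
  have e1 : 1 + 2 * (t * (a - 2)) <= expR (t * (a - 2)) ^+ 2.
    by rewrite -expRM_natl; apply: expR_ge1Dx.
  have e2 : expR (t * -2) * (1 + 2 * t) <= 1.
    have : 1 + 2 * t <= expR (2 * t) by apply: expR_ge1Dx.
    have h0 : expR (t * -2) * expR (2 * t) = 1.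
      by rewrite -expRD (_ : t * -2 + 2 * t = 0) ?expR0 //; ring.
    move=> h; have := expR_ge0 (t * -2); nra.
  have e3 : 1 + 4 * (t * (a - 2)) <= expR (t * -2) by lra.
  have e4 : (1 + 4 * (t * (a - 2))) * (1 + 2 * t) <= 1.
    have : 0 <= 1 + 2 * t by lra. nra.
  have : 0 < (2 * a - 3) * (a - 1) by apply: mulr_gt0; lra.
  move: e4; rewrite /t; nra.
move=> ha t ht; rewrite EL; apply: Phi_schwarz.
  have : expR (t * -2) <= 1 by rewrite expR_le1; nra.
  lra.
have hE : expR (t * -2) = expR (- t) ^+ 2 by rewrite -expRM_natl; congr expR; ring.
have hQ : expR (t * (a - 2)) ^+ 2 <= expR (- t).
  by rewrite -expRM_natl ler_expR; nra.
rewrite hE; have := sqr_ge0 (expR (- t) - 1); nra.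
Qed.
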